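(* The modulus multifunction $\mathrm{mod}\colon C([0,1])\rightrightarrows\mathbb N^{\mathbb N}$, which assigns to $f$ the set of all moduli of continuity of $f$, is not computable in polynomial time on the parametrised space $C(I)_i$ of interval functions.
   Context: Fix a finite non-empty alphabet $\Sigma$ and Baire space $\mathcal B=\Sigma^{*\Sigma^*}$. Oracle machines $M^?$ query an oracle $\varphi\in\mathcal B$ (a query costs one step); $M^\varphi(\mathbf a)$ is the output, $\mathrm{Time}_{M^?}(\varphi,\mathbf a)$ the step count. The size of $\varphi$ is $|\varphi|(n)=\max_{|\mathbf a|\le n}|\varphi(\mathbf a)|$. Second-order polynomials: smallest class of functions $\mathbb N^{\mathbb N}\times\mathbb N\to\mathbb N$ containing $(l,n)\mapsto p(n)$ for $p\in\mathbb N[X]$, closed under $P\mapsto((l,n)\mapsto l(P(l,n)))$, pointwise sum and product. For a partial surjection $\xi\colon\subseteq\mathcal B\to X$ and $\mu\colon\mathrm{dom}(\xi)\to\mathbb N^{\mathbb N}$ with non-decreasing values, $(X,\xi,\mu)$ is a preparametrised space. A multifunction $f\colon X\rightrightarrows Y$ between such spaces is computable in polynomial time if some oracle machine $M^?$ and second-order polynomials $P,Q$ satisfy for all $\varphi\in\mathrm{dom}(\xi_X)$: $M^\varphi$ total with $\xi_Y(M^\varphi)\in f(\xi_X(\varphi))$, $\mathrm{Time}_{M^?}(\varphi,\mathbf a)\le P(\mu_X(\varphi),|\mathbf a|)$, $\mu_Y(M^\varphi)(n)\le Q(\mu_X(\varphi),n)$. Here $\mathbb N^{\mathbb N}$ carries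 the total representation $\xi(\varphi)(n)=|\varphi(\mathtt1^n)|$ with the standard parameter (the size function). A function $\nu\colon\mathbb N\to\mathbb N$ is a modulus of continuity of $f\in C([0,1])$ if $|x-y|\le2^{-\nu(n)}$ implies $|f(x)-f(y)|\le2^{-n}$ for all $x,y\in[0,1]$, $n\in\mathbb N$. Encodings: integers in binary with sign bit; dyadic rationals $\mathbb D$ by finite binary expansion; pairs via a fixed pairing. $\mathrm I\mathbb D$: finite dyadic intervals $[r\pm\varepsilon]=[r-\varepsilon,r+\varepsilon]$ (pair of codes) and $[-\infty,\infty]$; $\mathrm{diam}([r\pm\varepsilon])=2\varepsilon$. A $\xi_{\mathbb R_i}$-name of $x$ is $\varphi\colon\mathbb N\to\mathrm I\mathbb D$ with $(\varphi(n))_n$ nested and $\bigcap_n\varphi(n)=\{x\}$. $C(I)_i=(C([0,1]),\xi_{if},\mu_{if})$: $\psi\colon\mathrm I\mathbb D\to\mathrm I\mathbb D$ is a name of $f$ iff for every $\xi_{\mathbb R_i}$-name $\varphi$ of some $x\in[0,1]$, $\psi\circ\varphi$ is a $\xi_{\mathbb R_i}$-name of $f(x)$; $\mu_{if}(\psi)(n)=\lceil\mathrm{lb}(\|f\|_\infty+1)\rceil+\min\{N\mid\forall J\in\mathrm I\mathbb D:\mathrm{diam}(J)\le2^{-N}\Rightarrow\mathrm{diam}(\psi(J))\le2^{-n}\}$. *)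

(* Defs.v *)
From Stdlib Require Import Reals ZArith.
From mathcomp Require Import ssreflect ssrfun ssrbool eqtype ssrnat seq choice fintype.

Set Implicit Arguments.
Unset Strict Implicit.
Unset Printing Implicit Defensive.

(* Oracle Turing machines over an alphabet S (tape alphabet = option S,     *)
(* None = blank).  Three one-way-infinite tapes: work tape (holds the input  *)
(* initially and the output at the end), query tape, answer tape.           *)
(* Entering the query state replaces the answer tape by phi(query word) in  *)
(* one step (a query costs one step).                                       *)

Inductive move := MoveL | MoveR | MoveS.

Record OracleMachine (S : finType) := {
  om_state : finType;
  om_start : om_state;
  om_halt : om_state;
  om_query : om_state;
  om_answer : om_state;
  om_delta : om_state -> option S -> option S -> option S ->
    om_state * (option S * move) * (option S * move) * (option S * move)
}.

Record tape (S : Type) := Tape { cells : seq (option S); head : nat }.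

Definition empty_tape (S : Type) : tape S := Tape [::] 0.
Definition tape_read (S : Type) (t : tape S) : option S := nth None (cells t) (head t).
Definition tape_write (S : Type) (t : tape S) (a : option S) : tape S :=
  Tape (set_nth None (cells t) (head t) a) (head t).
Definition tape_move (S : Type) (t : tape S) (m : move) : tape S :=
  match m with
  | MoveL => Tape (cells t) (head t).-1
  | MoveR => Tape (cells t) (head t).+1
  | MoveS => t
  end.
Definition tape_act (S : Type) (t : tape S) (am : option S * move) : tape S :=
  tape_move (tape_write t am.1) am.2.

Fixpoint word_of (S : Type) (l : seq (option S)) : seq S :=
  match l with
  | Some x :: l' => x :: word_of l'
  | _ => [::]
  end.
Definition tape_word (S : Type) (t : tape S) : seq S := word_of (cells t).

Record config (S : finType) (M : OracleMachine S) := Config {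
  c_state : om_state M;
  c_work : tape S;
  c_query : tape S;
  c_ans : tape S
}.

Definition step (S : finType) (M : OracleMachine S) (phi : seq S -> seq S)
  (c : config M) : config M :=
  if c_state c == om_halt M then c
  else if c_state c == om_query M then
    Config (om_answer M) (c_work c) (c_query c)
           (Tape (map Some (phi (tape_word (c_query c)))) 0)
  else
    match om_delta (c_state c) (tape_read (c_work c)) (tape_read (c_query c))
                   (tape_read (c_ans c)) with
    | (q', a1, a2, a3) =>
        Config q' (tape_act (c_work c) a1) (tape_act (c_query c) a2)
               (tape_act (c_ans c) a3)
    end.

Definition init_config (S : finType) (M : OracleMachine S) (a : seq S) : config M :=
  Config (om_start M) (Tape (map Some a) 0) (@empty_tape S) (@empty_tape S).

Definition run (S : finType) (M : OracleMachine S) (phi : seq S -> seq S)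
  (a : seq S) (t : nat) : config M :=
  iter t (step phi) (init_config M a).

Definition HaltsIn (S : finType) (M : OracleMachine S) (phi : seq S -> seq S)
  (a : seq S) (t : nat) (out : seq S) : Prop :=
  c_state (run M phi a t) = om_halt M /\
  (forall t', t' < t -> c_state (run M phi a t') <> om_halt M) /\
  out = tape_word (c_work (run M phi a t)).

(* Second-order polynomials (syntax and evaluation).                        *)

Inductive sop :=
  | SPoly of seq nat          (* (l,n) |-> p(n), p in N[X] given by its coefficients *)
  | SApp of sop
  | SAdd of sop & sop
  | SMul of sop & sop.

Fixpoint sop_eval (P : sop) (l : nat -> nat) (n : nat) : nat :=
  match P with
  | SPoly cs => foldr (fun c acc => c + n * acc) 0 cs
  | SApp P1 => l (sop_eval P1 l n)
  | SAdd P1 P2 => sop_eval P1 l n + sop_eval P2 l n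
  | SMul P1 P2 => sop_eval P1 l n * sop_eval P2 l n
  end.

(* Encodings over S, with two distinguished distinct symbols b0 ('0'), b1   *)
(* ('1').                                                                   *)

Section Encodings.
Variables (S : finType) (b0 b1 : S).

Definition bit_of (x : S) : option nat :=
  if x == b0 then Some 0 else if x == b1 then Some 1 else None.

(* natural numbers in binary, most significant bit first *)
Definition decode_nat (s : seq S) : option nat :=
  foldl (fun acc x => match acc, bit_of x with
                      | Some v, Some b => Some (2 * v + b)
                      | _, _ => None end) (Some 0) s.

(* integers: sign bit (b0 = +, b1 = -) followed by the binary magnitude *)
Definition decode_int (s : seq S) : option Z :=
  match s with
  | x :: s' =>
      match decode_nat s' with
      | Some v => if x == b0 then Some (Z.of_nat v)
                  else if x == b1 then Some (- Z.of_nat v)%Z else None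
      | None => None
      end
  | [::] => None
  end.

(* pairing: <u,v> = u1 u1 u2 u2 ... uk uk b0 b1 v *)
Fixpoint unpair (s : seq S) : option (seq S * seq S) :=
  match s with
  | x :: y :: t =>
      if (x == b0) && (y == b1) then Some ([::], t)
      else if x == y then
        match unpair t with
        | Some (u, v) => Some (x :: u, v)
        | None => None
        end
      else None
  | _ => None
  end.

(* dyadic rationals m * 2^-k, coded as <int m, nat k> (finite binary expansion) *)
Definition decode_dyadic (s : seq S) : option R :=
  match unpair s with
  | Some (u, v) =>
      match decode_int u, decode_nat v with
      | Some z, Some k => Some (IZR z / 2 ^ k)%R
      | _, _ => None
      end
  | None => None
  end.

Inductive IDyadic := IFin of R & R  (* [r +- eps] *) | IInf (* [-oo, oo] *).

Definition decode_interval (s : seq S) : option IDyadic :=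
  match s with
  | [::] => Some IInf
  | _ =>
    match unpair s with
    | Some (u, v) =>
        match decode_dyadic u, decode_dyadic v with
        | Some r, Some e => if Rle_dec 0 e then Some (IFin r e) else None
        | _, _ => None
        end
    | None => None
    end
  end.

Definition in_interval (I : IDyadic) (x : R) : Prop :=
  match I with
  | IFin r e => (r - e <= x <= r + e)%R
  | IInf => True
  end.

Definition IsRealNameI (phi : nat -> seq S) (x : R) : Prop :=
  (forall n, exists I, decode_interval (phi n) = Some I) /\
  (forall n I J, decode_interval (phi n) = Some I ->
     decode_interval (phi n.+1) = Some J ->
     forall y, in_interval J y -> in_interval I y) /\
  (forall y, (forall n I, decode_interval (phi n) = Some I -> in_interval I y)
             <-> y = x).

Definition IsFunNameI (psi : seq S -> seq S) (f : R -> R) : Prop :=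
  forall (phi : nat -> seq S) (x : R), (0 <= x <= 1)%R ->
    IsRealNameI phi x -> IsRealNameI (fun n => psi (phi n)) (f x).

Definition ModCondI (psi : seq S -> seq S) (n N : nat) : Prop :=
  forall s r e, decode_interval s = Some (IFin r e) -> (2 * e <= / 2 ^ N)%R ->
    exists r' e', decode_interval (psi s) = Some (IFin r' e') /\
                  (2 * e' <= / 2 ^ n)%R.

(* mu_{if}(psi) = m ; the value exists only when all the minima exist *)
Definition IsMuIf (psi : seq S -> seq S) (f : R -> R) (m : nat -> nat) : Prop :=
  forall n, exists k N,
    (* k = ceil(lb(||f||_oo + 1)), i.e. least k with ||f||_oo + 1 <= 2^k *)
    ((forall x, (0 <= x <= 1)%R -> (Rabs (f x) + 1 <= 2 ^ k)%R) /\
     (forall k', (forall x, (0 <= x <= 1)%R -> (Rabs (f x) + 1 <= 2 ^ k')%R) ->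
                 k <= k')) /\
    ModCondI psi n N /\ (forall N', ModCondI psi n N' -> N <= N') /\
    m n = k + N.

End Encodings.

Definition Continuous01 (f : R -> R) : Prop :=
  forall x, (0 <= x <= 1)%R -> forall eps, (0 < eps)%R ->
    exists delta, (0 < delta)%R /\
      forall y, (0 <= y <= 1)%R -> (Rabs (x - y) < delta)%R ->
        (Rabs (f x - f y) < eps)%R.

Definition IsModulus (f : R -> R) (nu : nat -> nat) : Prop :=
  forall n x y, (0 <= x <= 1)%R -> (0 <= y <= 1)%R ->
    (Rabs (x - y) <= / 2 ^ nu n)%R -> (Rabs (f x - f y) <= / 2 ^ n)%R.

(* Main.v *)
Set Warnings "-notation-overridden".
Require Import Defs.
From Stdlib Require Import Reals.
From Stdlib Require Import Lra Lia ZArith ClassicalEpsilon Classical.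
From mathcomp Require Import ssreflect ssrfun ssrbool eqtype ssrnat seq fintype.
From mathcomp Require Import zify.
Set Implicit Arguments.
Unset Strict Implicit.
Unset Printing Implicit Defensive.


Fixpoint queries (S : finType) (M : OracleMachine S) (phi : seq S -> seq S)
  (c : config M) (t : nat) : seq (seq S) :=
  match t with
  | 0 => [::]
  | t'.+1 => (if c_state c == om_query M then [:: tape_word (c_query c)] else [::])
             ++ queries phi (step phi c) t'
  end.

Lemma size_queries (S : finType) (M : OracleMachine S) phi (c : config M) t :
  (size (queries phi c t) <= t)%N.
Proof.
elim: t c => [|t IH] c //=; rewrite size_cat.
have := IH (step phi c); case: (c_state c == om_query M) => /=; lia.
Qed.

Lemma run_agree (S : finType) (M : OracleMachine S) (phi1 phi2 : seq S -> seq S) t :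
  forall c : config M, (forall w, w \in queries phi1 c t -> phi1 w = phi2 w) ->
  forall t', (t' <= t)%N -> iter t' (step phi2) c = iter t' (step phi1) c.
Proof.
elim: t => [|t IH] c hq t' ht'.
- by have -> : t' = 0 by lia.
- case: t' ht' => [|t'] ht' //.
  rewrite !iterSr.
  have hs : step phi2 c = step phi1 c.
    rewrite /step; case: (c_state c == om_halt M) => //.
    case E: (c_state c == om_query M) => //.
    rewrite (hq (tape_word (c_query c))) //= E mem_cat mem_seq1 eqxx //.
  rewrite hs; apply: IH => //.
  move=> w hw; apply: hq => /=; rewrite mem_cat hw orbT //.
Qed.

Lemma halts_agree (S : finType) (M : OracleMachine S) (phi1 phi2 : seq S -> seq S) a t out :
  HaltsIn M phi1 a t out ->
  (forall w, w \in queries phi1 (init_config M a) t -> phi1 w = phi2 w) ->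
  HaltsIn M phi2 a t out.
Proof.
move=> [h1 [h2 h3]] hq.
have E := run_agree hq.
rewrite /HaltsIn /run E //; split => //; split.
- move=> t' ht'; rewrite E; last exact: ltnW.
  exact: h2.
- by [].
Qed.

Lemma halts_unique (S : finType) (M : OracleMachine S) phi a t1 o1 t2 o2 :
  HaltsIn M phi a t1 o1 -> HaltsIn M phi a t2 o2 -> o1 = o2.
Proof.
move=> [a1 [b1 c1]] [a2 [b2 c2]].
have ht : t1 = t2.
  case: (ltngtP t1 t2) => // h.
  - by have := b2 _ h.
  - by have := b1 _ h.
by rewrite c1 c2 ht.
Qed.

Lemma sop_mono P (l l' : nat -> nat) n : (forall x, (l x <= l' x)%N) ->
  (forall x y, (x <= y)%N -> (l' x <= l' y)%N) ->
  (sop_eval P l n <= sop_eval P l' n)%N.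
Proof.
move=> hl hm; elim: P => [cs|P1 IH|P1 IH1 P2 IH2|P1 IH1 P2 IH2] /=.
- by [].
- exact: leq_trans (hl _) (hm _ _ IH).
- exact: leq_add.
- exact: leq_mul.
Qed.

Lemma foldr_bound cs n :
  (foldr (fun c acc => c + n * acc) 0 cs <= sumn cs * (n + 1) ^ size cs)%N.
Proof.
elim: cs => [|c cs IH] //=.
have hp : (1 <= (n + 1) ^ size cs)%N by rewrite expn_gt0; lia.
rewrite expnS.
set X := (n + 1) ^ size cs in hp IH *.
set F := foldr _ _ _ in IH *.
nia.
Qed.

Lemma sop_poly P c : exists A d, forall n,
  (sop_eval P (fun x => x + c) n <= A * (n + 1) ^ d)%N.
Proof.
elim: P => [cs|P1 [A [d IH]]|P1 [A1 [d1 IH1]] P2 [A2 [d2 IH2]]|P1 [A1 [d1 IH1]] P2 [A2 [d2 IH2]]] /=.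
- exists (sumn cs), (size cs) => n; exact: foldr_bound.
- exists (A + c), d => n.
  have hp : (1 <= (n + 1) ^ d)%N by rewrite expn_gt0; lia.
  have := IH n; nia.
- exists (A1 + A2), (d1 + d2) => n.
  have hp1 : ((n + 1) ^ d1 <= (n + 1) ^ (d1 + d2))%N by apply: leq_pexp2l; lia.
  have hp2 : ((n + 1) ^ d2 <= (n + 1) ^ (d1 + d2))%N by apply: leq_pexp2l; lia.
  have := IH1 n; have := IH2 n; nia.
- exists (A1 * A2), (d1 + d2) => n.
  rewrite expnD.
  have := leq_mul (IH1 n) (IH2 n); nia.
Qed.

Lemma sq_le_pow s : (4 <= s)%N -> (s * s <= 2 ^ s)%N.
Proof.
elim: s => [|s IH] // hs.
case: (ltngtP s 3) => h.
- lia.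
- have := IH h; rewrite expnS; nia.
- by rewrite h.
Qed.

Lemma exp_dom C d : exists j, (C * j.+2 ^ d < 2 ^ j.+1)%N.
Proof.
set s := (C + d + 4)%N.
have hs : (s * s <= 2 ^ s)%N by apply: sq_le_pow; lia.
have hT : (C + s * d + 1 < 2 ^ s)%N by nia.
exists (2 ^ s - 2)%N.
have -> : (2 ^ s - 2).+2 = 2 ^ s by lia.
have -> : (2 ^ s - 2).+1 = (2 ^ s - 1)%N by lia.
rewrite -expnM.
have h1 : (C < 2 ^ C)%N by apply: ltn_expl.
have h2 : (C * 2 ^ (s * d) < 2 ^ (C + s * d))%N.
  rewrite expnD ltn_pmul2r //; rewrite expn_gt0 //.
apply: leq_trans h2 _.
apply: leq_pexp2l => //; lia.
Qed.

Definition hitb (A : Type) (hit : A -> nat -> Prop) (s : A) (i : nat) : bool :=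
  if excluded_middle_informative (hit s i) then true else false.

Lemma hitbP (A : Type) (hit : A -> nat -> Prop) s i : hitb hit s i <-> hit s i.
Proof. rewrite /hitb; case: excluded_middle_informative => h; split => //. Qed.

Lemma count_one (A : Type) (hit : A -> nat -> Prop) s N :
  (forall i i', hit s i -> hit s i' -> (i <= i' + 4)%N) ->
  (count (hitb hit s) (iota 0 N) <= 9)%N.
Proof.
move=> hd.
case E: (has (hitb hit s) (iota 0 N)); last first.
  by move: E; rewrite has_count; case: count.
move/hasP: E => [i1 _ hi1].
rewrite -size_filter.
have -> : 9 = size (iota (i1 - 4) 9) by rewrite size_iota.
apply: uniq_leq_size; first by apply: filter_uniq; exact: iota_uniq.
move=> i; rewrite mem_filter => /andP [hi _].
have a1 := hd _ _ (proj1 (hitbP _ _ _) hi) (proj1 (hitbP _ _ _) hi1).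
have a2 := hd _ _ (proj1 (hitbP _ _ _) hi1) (proj1 (hitbP _ _ _) hi).
rewrite mem_iota; apply/andP; split; lia.
Qed.

Lemma pigeon (A : eqType) (L : seq A) (hit : A -> nat -> Prop) N :
  (forall s, s \in L -> forall i i', hit s i -> hit s i' -> (i <= i' + 4)%N) ->
  (9 * size L < N)%N -> exists i, (i < N)%N /\ forall s, s \in L -> ~ hit s i.
Proof.
move=> hd hN.
have hc : (count (fun i => has (fun s => hitb hit s i) L) (iota 0 N) <= 9 * size L)%N.
  elim: L hd {hN} => [|s L IH] hd /=.
  - by rewrite count_pred0.
  - have h1 := count_one N (hd s (mem_head _ _)).
    have h2 := IH (fun s' hs' => hd s' ltac:(by rewrite in_cons hs' orbT)).
    have := count_predUI (hitb hit s) (fun i => has (fun s => hitb hit s i) L) (iota 0 N).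
    have -> : count (predU (hitb hit s) (fun i => has (fun s => hitb hit s i) L)) (iota 0 N)
      = count (fun i => hitb hit s i || has (fun s => hitb hit s i) L) (iota 0 N) by [].
    lia.
have : ~~ all (fun i => has (fun s => hitb hit s i) L) (iota 0 N).
  rewrite all_count size_iota; apply/negP => /eqP h; lia.
move/allPn => [i hi hn].
exists i; split; first by move: hi; rewrite mem_iota; lia.
move=> s hs hh; move/hasPn: hn => /(_ s hs).
by move/hitbP: hh => ->.
Qed.


Fixpoint enc_pos (S : finType) (b0 b1 : S) (p : positive) : seq S :=
  match p with
  | xH => [:: b1]
  | xO q => rcons (enc_pos b0 b1 q) b0
  | xI q => rcons (enc_pos b0 b1 q) b1
  end.

Definition enc_nat (S : finType) (b0 b1 : S) (v : nat) : seq S :=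
  match v with 0 => [::] | _ => enc_pos b0 b1 (Pos.of_nat v) end.

Lemma bit_of_b0 (S : finType) (b0 b1 : S) : bit_of b0 b1 b0 = Some 0.
Proof. by rewrite /bit_of eqxx. Qed.

Lemma bit_of_b1 (S : finType) (b0 b1 : S) : b0 != b1 -> bit_of b0 b1 b1 = Some 1.
Proof. move=> h; rewrite /bit_of eq_sym (negbTE h) eqxx //. Qed.

Lemma decode_nat_rcons (S : finType) (b0 b1 : S) s x v b :
  decode_nat b0 b1 s = Some v -> bit_of b0 b1 x = Some b ->
  decode_nat b0 b1 (rcons s x) = Some (2 * v + b).
Proof. by rewrite /decode_nat -cats1 foldl_cat => -> /= ->. Qed.

Lemma decode_enc_pos (S : finType) (b0 b1 : S) (hb : b0 != b1) p :
  decode_nat b0 b1 (enc_pos b0 b1 p) = Some (Pos.to_nat p).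
Proof.
elim: p => [q IH|q IH|] /=.
- rewrite (decode_nat_rcons IH (bit_of_b1 hb)) Pos2Nat.inj_xI; congr Some; lia.
- rewrite (decode_nat_rcons IH (bit_of_b0 b0 b1)) Pos2Nat.inj_xO; congr Some; lia.
- by rewrite /decode_nat /= (bit_of_b1 hb).
Qed.

Lemma decode_enc_nat (S : finType) (b0 b1 : S) (hb : b0 != b1) v :
  decode_nat b0 b1 (enc_nat b0 b1 v) = Some v.
Proof.
case: v => [|v] //.
rewrite /enc_nat decode_enc_pos // Nat2Pos.id //.
Qed.

Definition pairS (S : finType) (b0 b1 : S) (u v : seq S) : seq S :=
  flatten [seq [:: x; x] | x <- u] ++ [:: b0, b1 & v].

Lemma unpair_pair (S : finType) (b0 b1 : S) (hb : b0 != b1) u v :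
  unpair b0 b1 (pairS b0 b1 u v) = Some (u, v).
Proof.
rewrite /pairS; elim: u => [|x u IH] /=.
- by rewrite !eqxx.
- rewrite eqxx.
  have -> : (x == b0) && (x == b1) = false.
    case: (x =P b0) => // ->; by rewrite (negbTE hb).
  by rewrite IH.
Qed.

Definition enc_int (S : finType) (b0 b1 : S) (z : Z) : seq S :=
  match z with
  | Zneg p => b1 :: enc_nat b0 b1 (Pos.to_nat p)
  | _ => b0 :: enc_nat b0 b1 (Z.to_nat z)
  end.

Lemma decode_enc_int (S : finType) (b0 b1 : S) (hb : b0 != b1) z :
  decode_int b0 b1 (enc_int b0 b1 z) = Some z.
Proof.
case: z => [|p|p]; rewrite /enc_int /decode_int decode_enc_nat //.
- by rewrite eqxx.
- by rewrite eqxx positive_nat_Z.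
- by rewrite eq_sym (negbTE hb) eqxx positive_nat_Z.
Qed.

Definition enc_dy (S : finType) (b0 b1 : S) (z : Z) (k : nat) : seq S :=
  pairS b0 b1 (enc_int b0 b1 z) (enc_nat b0 b1 k).

Lemma decode_enc_dy (S : finType) (b0 b1 : S) (hb : b0 != b1) z k :
  decode_dyadic b0 b1 (enc_dy b0 b1 z k) = Some (IZR z / 2 ^ k)%R.
Proof.
by rewrite /decode_dyadic /enc_dy unpair_pair // decode_enc_int // decode_enc_nat.
Qed.

Definition dyadic (x : R) : Prop := exists z k, x = (IZR z / 2 ^ k)%R.

Definition encD (S : finType) (b0 b1 : S) (x : R) : seq S :=
  epsilon (inhabits [::]) (fun s => decode_dyadic b0 b1 s = Some x).

Lemma decode_encD (S : finType) (b0 b1 : S) (hb : b0 != b1) x :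
  dyadic x -> decode_dyadic b0 b1 (encD b0 b1 x) = Some x.
Proof.
move=> [z [k ->]]; rewrite /encD; apply epsilon_spec.
exists (enc_dy b0 b1 z k); exact: decode_enc_dy.
Qed.

Definition encI (S : finType) (b0 b1 : S) (c rho : R) : seq S :=
  pairS b0 b1 (encD b0 b1 c) (encD b0 b1 rho).

Lemma decode_encI (S : finType) (b0 b1 : S) (hb : b0 != b1) c rho :
  dyadic c -> dyadic rho -> (0 <= rho)%R ->
  decode_interval b0 b1 (encI b0 b1 c rho) = Some (IFin c rho).
Proof.
move=> dc dr hr; rewrite /decode_interval.
have -> : match encI b0 b1 c rho with [::] => Some IInf | _ :: _ =>
   match unpair b0 b1 (encI b0 b1 c rho) with
    | Some (u, v) =>
        match decode_dyadic b0 b1 u, decode_dyadic b0 b1 v with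
        | Some r, Some e => if Rle_dec 0 e then Some (IFin r e) else None
        | _, _ => None
        end
    | None => None
    end end =
   match unpair b0 b1 (encI b0 b1 c rho) with
    | Some (u, v) =>
        match decode_dyadic b0 b1 u, decode_dyadic b0 b1 v with
        | Some r, Some e => if Rle_dec 0 e then Some (IFin r e) else None
        | _, _ => None
        end
    | None => None
    end.
  rewrite /encI /pairS; by case: (flatten _).
rewrite /encI unpair_pair // !decode_encD //.
by case: (Rle_dec 0 rho).
Qed.

Lemma decode_dyadic_dy (S : finType) (b0 b1 : S) s x :
  decode_dyadic b0 b1 s = Some x -> dyadic x.
Proof.
rewrite /decode_dyadic.
case: (unpair b0 b1 s) => [[u v]|] //.
case: (decode_int b0 b1 u) => [z|] //; case: (decode_nat b0 b1 v) => [k|] //.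
by move=> [<-]; exists z, k.
Qed.

Lemma decode_interval_fin (S : finType) (b0 b1 : S) s r e :
  decode_interval b0 b1 s = Some (IFin r e) -> dyadic r /\ dyadic e /\ (0 <= e)%R.
Proof.
rewrite /decode_interval; case: s => [|x s] //.
case: (unpair b0 b1 (x :: s)) => [[u v]|] //.
case E1: (decode_dyadic b0 b1 u) => [r'|] //; case E2: (decode_dyadic b0 b1 v) => [e'|] //.
case: (Rle_dec 0 e') => // h [<- <-].
split; [exact: decode_dyadic_dy E1| split; [exact: decode_dyadic_dy E2| exact h]].
Qed.

Local Open Scope R_scope.


Lemma pow2_pos k : 0 < 2 ^ k.
Proof. apply: pow_lt; lra. Qed.

Lemma pow2_IZR k : 2 ^ k = IZR (2 ^ Z.of_nat k).
Proof. by rewrite -pow_IZR. Qed.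

Lemma dy_IZR z : dyadic (IZR z).
Proof. exists z, 0%nat; simpl; field. Qed.

Lemma dy_add x y : dyadic x -> dyadic y -> dyadic (x + y).
Proof.
move=> [z1 [k1 ->]] [z2 [k2 ->]].
exists (z1 * 2 ^ Z.of_nat k2 + z2 * 2 ^ Z.of_nat k1)%Z, (k1 + k2)%nat.
rewrite plus_IZR !mult_IZR -!pow2_IZR pow_add.
have := pow2_pos k1; have := pow2_pos k2 => h1 h2.
field; lra.
Qed.

Lemma dy_mul x y : dyadic x -> dyadic y -> dyadic (x * y).
Proof.
move=> [z1 [k1 ->]] [z2 [k2 ->]].
exists (z1 * z2)%Z, (k1 + k2)%nat.
rewrite mult_IZR pow_add.
have := pow2_pos k1; have := pow2_pos k2 => h1 h2.
field; lra.
Qed.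

Lemma dy_opp x : dyadic x -> dyadic (- x).
Proof. move=> [z [k ->]]; exists (- z)%Z, k; rewrite opp_IZR; field; have := pow2_pos k; lra. Qed.

Lemma dy_sub x y : dyadic x -> dyadic y -> dyadic (x - y).
Proof. move=> hx hy; apply: dy_add => //; exact: dy_opp. Qed.

Lemma dy_ipow k : dyadic (/ 2 ^ k).
Proof. exists 1%Z, k; rewrite /Rdiv Rmult_1_l //. Qed.

Lemma dy_pow k : dyadic (2 ^ k).
Proof. rewrite pow2_IZR; exact: dy_IZR. Qed.

Lemma dy_half x : dyadic x -> dyadic (x / 2).
Proof.
move=> hx; rewrite /Rdiv; apply: dy_mul => //.
have -> : / 2 = / 2 ^ 1 by rewrite pow_1.
exact: dy_ipow.
Qed.

Lemma dy_max x y : dyadic x -> dyadic y -> dyadic (Rmax x y).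
Proof. move=> hx hy; exact: Rmax_case. Qed.

Lemma dy_min x y : dyadic x -> dyadic y -> dyadic (Rmin x y).
Proof. move=> hx hy; rewrite /Rmin; by case: (Rle_dec x y). Qed.

Lemma dy_abs x : dyadic x -> dyadic (Rabs x).
Proof. move=> hx; rewrite /Rabs; case: (Rcase_abs x) => _ //; exact: dy_opp. Qed.

Lemma ipow_pos k : 0 < / 2 ^ k.
Proof. apply: Rinv_0_lt_compat; exact: pow2_pos. Qed.

Lemma ipow_le a b : (a <= b)%N -> / 2 ^ b <= / 2 ^ a.
Proof.
move=> h; apply: Rinv_le_contravar; first exact: pow2_pos.
apply: Rle_pow; first lra. by apply/leP.
Qed.

Lemma ipow_lt_inv a b : / 2 ^ a < / 2 ^ b -> (b < a)%N.
Proof.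
move=> h; rewrite ltnNge; apply/negP => hab.
have := ipow_le hab; lra.
Qed.

Lemma ipow_S k : / 2 ^ k.+1 = / 2 ^ k / 2.
Proof. rewrite /= Rinv_mult; have := pow2_pos k; lra. Qed.

Lemma ipow_le1 k : / 2 ^ k <= 1.
Proof. have := ipow_le (leq0n k); rewrite /= Rinv_1; lra. Qed.

Lemma pow_ge_INR n : INR n <= 2 ^ n.
Proof.
elim: n => [|n IH]; first (simpl; lra).
rewrite S_INR /=.
have : 1 <= 2 ^ n by have := Rle_pow 2 0 n; simpl; move=> h; apply: h; [lra|lia].
lra.
Qed.

Lemma ex_ipow_lt e : 0 < e -> exists N, / 2 ^ N < e.
Proof.
move=> he; have [N [h1 h2]] := archimed_cor1 e he.
exists N; apply: Rle_lt_trans h1.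
apply: Rinv_le_contravar; first by apply: lt_0_INR; lia.
exact: pow_ge_INR.
Qed.

Lemma step_find (P : nat -> Prop) N : P 0%nat -> ~ P N -> exists k, P k /\ ~ P k.+1.
Proof.
elim: N => [|N IH] h0 hN; first by [].
case: (classic (P N)) => hPN; first by exists N.
exact: IH.
Qed.

Definition kof (e : R) : nat :=
  epsilon (inhabits 0%nat) (fun k => e <= / 2 ^ k /\ / 2 ^ k.+1 < e).

Lemma kof_spec e : 0 < e <= 1 -> e <= / 2 ^ kof e /\ / 2 ^ (kof e).+1 < e.
Proof.
move=> [h1 h2]; rewrite /kof; apply epsilon_spec.
have [N hN] := ex_ipow_lt h1.
have [k [hk1 hk2]] := step_find (P := fun k => e <= / 2 ^ k) (N := N)
  ltac:(simpl; rewrite Rinv_1; lra) ltac:(lra).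
exists k; split => //; lra.
Qed.

Definition wfun (e : R) : R :=
  if Rle_dec e 0 then 0 else if Rlt_dec 1 e then 2 * e else / 2 ^ kof e.

Lemma w_nonneg e : 0 <= wfun e.
Proof.
rewrite /wfun; case: (Rle_dec e 0) => /= h; first lra.
case: (Rlt_dec 1 e) => /= h'; first lra.
have := ipow_pos (kof e); lra.
Qed.

Lemma w_ge e : 0 <= e -> e <= wfun e.
Proof.
move=> he; rewrite /wfun; case: (Rle_dec e 0) => /= h; first lra.
case: (Rlt_dec 1 e) => /= h'; first lra.
have := kof_spec (e := e) ltac:(lra); lra.
Qed.

Lemma w_le e : 0 <= e -> wfun e <= 2 * e.
Proof.
move=> he; rewrite /wfun; case: (Rle_dec e 0) => /= h; first lra.
case: (Rlt_dec 1 e) => /= h'; first lra.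
have := kof_spec (e := e) ltac:(lra); rewrite ipow_S; lra.
Qed.

Lemma w_zero e : e <= 0 -> wfun e = 0.
Proof. move=> h; rewrite /wfun; by case: (Rle_dec e 0). Qed.

Lemma w_kof e : 0 < e <= 1 -> wfun e = / 2 ^ kof e.
Proof.
move=> h; rewrite /wfun; case: (Rle_dec e 0) => /= h1; first lra.
by case: (Rlt_dec 1 e) => /= h2; first lra.
Qed.

Lemma w_gt1 e : 1 < e -> wfun e = 2 * e.
Proof.
move=> h; rewrite /wfun; case: (Rle_dec e 0) => /= h1; first lra.
by case: (Rlt_dec 1 e) => /= h2; last lra.
Qed.

Lemma w_mono e' e : 0 <= e' -> e' <= e -> wfun e' <= wfun e.
Proof.
move=> h0 h.
case: (Rle_dec e' 0) => h1; first by rewrite (w_zero h1); apply: w_nonneg.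
case: (Rlt_dec 1 e) => h3.
- rewrite (w_gt1 h3); have := w_le h0; lra.
- rewrite (w_kof (e := e) ltac:(lra)) (w_kof (e := e') ltac:(lra)).
  have [a1 a2] := kof_spec (e := e') ltac:(lra).
  have [c1 c2] := kof_spec (e := e) ltac:(lra).
  apply: ipow_le.
  have := @ipow_lt_inv (kof e').+1 (kof e) ltac:(lra).
  by [].
Qed.

Lemma w_small e j : 0 <= e -> e <= / 2 ^ j -> wfun e <= / 2 ^ j.
Proof.
move=> h0 h; rewrite /wfun.
case: (Rle_dec e 0) => /= h1; first by have := ipow_pos j; lra.
have := ipow_le1 j => hj.
case: (Rlt_dec 1 e) => /= h3; first lra.
have [a1 a2] := kof_spec (e := e) ltac:(lra).
apply: ipow_le.
have := @ipow_lt_inv (kof e).+1 j ltac:(lra).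
by [].
Qed.

Lemma w_big e j : / 2 ^ j < e -> 2 * / 2 ^ j <= wfun e.
Proof.
move=> h; rewrite /wfun.
have := ipow_pos j => hp.
case: (Rle_dec e 0) => /= h1; first lra.
have := ipow_le1 j => hj.
case: (Rlt_dec 1 e) => /= h3; first lra.
have [a1 a2] := kof_spec (e := e) ltac:(lra).
have hk := @ipow_lt_inv j (kof e) ltac:(lra).
have := ipow_le hk; rewrite ipow_S; lra.
Qed.

Lemma w_dy e : dyadic e -> dyadic (wfun e).
Proof.
move=> he; rewrite /wfun.
case: (Rle_dec e 0) => /= _; first exact: (dy_IZR 0).
case: (Rlt_dec 1 e) => /= _; last exact: dy_ipow.
apply: dy_mul => //; exact: (dy_IZR 2).
Qed.



Definition tent (H L x0 x : R) : R := Rmax 0 (H - L * Rabs (x - x0)).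
Definition clamp (a b x0 : R) : R := Rmax a (Rmin b x0).
Definition LoF (H L x0 r e : R) : R := Rmax 0 (tent H L x0 r - L * e).
Definition UpF (H L x0 r e : R) : R := tent H L x0 (clamp (r - e) (r + e) x0).

Lemma tent_nonneg H L x0 x : 0 <= tent H L x0 x.
Proof. exact: Rmax_l. Qed.

Lemma tent_le H L x0 x : 0 <= H -> 0 <= L -> tent H L x0 x <= H.
Proof.
move=> hH hL; rewrite /tent; apply: Rmax_lub => //.
have := Rabs_pos (x - x0) => ha.
have := Rmult_le_pos _ _ hL ha; lra.
Qed.

Lemma tent_lip H L x0 x y : 0 <= L ->
  tent H L x0 y <= tent H L x0 x + L * Rabs (x - y).
Proof.
move=> hL; rewrite /tent.
have t : Rabs (x - x0) <= Rabs (y - x0) + Rabs (x - y).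
  have -> : x - x0 = (y - x0) + (x - y) by ring.
  by apply: Rabs_triang.
have t2 := Rmult_le_compat_l _ _ _ hL t.
have := Rmax_l 0 (H - L * Rabs (x - x0)).
have := Rmax_r 0 (H - L * Rabs (x - x0)).
have := Rmax_r 0 (H - L * Rabs (y - x0)).
have := Rmult_le_pos _ _ hL (Rabs_pos (x - y)).
move=> h1 h0 h2 h3.
rewrite Rmult_plus_distr_l in t2; apply: Rmax_lub; lra.
Qed.

Lemma tent_anti H L x0 u v : 0 <= L -> Rabs (u - x0) <= Rabs (v - x0) ->
  tent H L x0 v <= tent H L x0 u.
Proof.
move=> hL h; rewrite /tent.
have := Rmult_le_compat_l _ _ _ hL h => h2.
apply: Rmax_lub; first exact: Rmax_l.
have := Rmax_r 0 (H - L * Rabs (u - x0)); lra.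
Qed.

Lemma clamp_in a b x0 : a <= b -> a <= clamp a b x0 <= b.
Proof.
move=> h; rewrite /clamp /Rmin /Rmax.
case: (Rle_dec b x0) => /= h1; case: (Rle_dec a _) => /= h2; lra.
Qed.

Lemma clamp_close a b x0 x : a <= x <= b ->
  Rabs (clamp a b x0 - x0) <= Rabs (x - x0).
Proof.
move=> h; rewrite /clamp /Rmin /Rmax.
case: (Rle_dec b x0) => /= h1; case: (Rle_dec a _) => /= h2;
 rewrite /Rabs; case: Rcase_abs => h3; case: Rcase_abs => h4; lra.
Qed.

Lemma tent_clamp H L x0 a b x : 0 <= L -> a <= x <= b ->
  tent H L x0 x <= tent H L x0 (clamp a b x0).
Proof. move=> hL h; apply: tent_anti => //; exact: clamp_close. Qed.



Lemma Rabs_le_bound x r e : r - e <= x <= r + e -> Rabs (x - r) <= e.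
Proof. move=> h; rewrite /Rabs; case: Rcase_abs => _; lra. Qed.

Lemma LU_in H L x0 r e x : 0 <= L -> r - e <= x <= r + e ->
  LoF H L x0 r e <= tent H L x0 x <= UpF H L x0 r e.
Proof.
move=> hL hx; split.
- rewrite /LoF; apply: Rmax_lub; first exact: tent_nonneg.
  have h1 := Rmult_le_compat_l _ _ _ hL (Rabs_le_bound hx).
  have h2 := tent_lip H x0 x r hL.
  lra.
- rewrite /UpF; apply: tent_clamp => //.
Qed.

Lemma LU_basic H L x0 r e : 0 <= H -> 0 <= L -> 0 <= e ->
  0 <= LoF H L x0 r e /\ UpF H L x0 r e <= H /\
  LoF H L x0 r e <= UpF H L x0 r e /\
  UpF H L x0 r e - LoF H L x0 r e <= 2 * (L * e).
Proof.
move=> hH hL he.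
have hr : r - e <= r <= r + e by lra.
have [l1 l2] := LU_in H x0 hL hr.
split; first exact: Rmax_l.
split; first exact: tent_le.
split; first lra.
have hc := clamp_in x0 (a := r - e) (b := r + e) ltac:(lra).
have := tent_lip H x0 r (clamp (r - e) (r + e) x0) hL.
have := Rmult_le_compat_l _ _ _ hL (Rabs_le_bound (x := clamp (r - e) (r + e) x0) hc).
rewrite Rabs_minus_sym.
have := Rmax_r 0 (tent H L x0 r - L * e).
rewrite /LoF /UpF; lra.
Qed.

Lemma LU_mono H L x0 r e r' e' : 0 <= L -> 0 <= e' ->
  r - e <= r' - e' -> r' + e' <= r + e ->
  LoF H L x0 r e <= LoF H L x0 r' e' /\ UpF H L x0 r' e' <= UpF H L x0 r e.
Proof.
move=> hL he' h1 h2; split.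
- rewrite /LoF; apply: Rmax_lub; first exact: Rmax_l.
  apply: Rle_trans (Rmax_r _ _).
  have := tent_lip H x0 r' r hL.
  have hb : Rabs (r' - r) <= e - e' by rewrite /Rabs; case: Rcase_abs => _; lra.
  have := Rmult_le_compat_l _ _ _ hL hb.
  rewrite Rmult_minus_distr_l; lra.
- have hc := clamp_in x0 (a := r' - e') (b := r' + e') ltac:(lra).
  rewrite /UpF; apply: tent_clamp => //; lra.
Qed.

Lemma LU_zero H L x0 r e : 0 <= L -> 0 <= e ->
  (forall x, r - e <= x <= r + e -> tent H L x0 x = 0) ->
  LoF H L x0 r e = 0 /\ UpF H L x0 r e = 0.
Proof.
move=> hL he hz.
have hc := clamp_in x0 (a := r - e) (b := r + e) ltac:(lra).
split.
- rewrite /LoF hz; last lra.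
  have := Rmult_le_pos _ _ hL he => h.
  rewrite /Rmax; case: Rle_dec => /= h'; lra.
- rewrite /UpF; exact: hz.
Qed.



Definition outc (H L x0 : R) (j : nat) (r e : R) : R * R :=
  if Rlt_dec (/ 2 ^ j) e then (0, wfun e)
  else ((LoF H L x0 r e + UpF H L x0 r e) / 2,
        (UpF H L x0 r e - LoF H L x0 r e) / 2 + wfun e).

Definition psiP (S : finType) (b0 b1 : S) (H L x0 : R) (j : nat) (s : seq S) : seq S :=
  match decode_interval b0 b1 s with
  | Some (IFin r e) => encI b0 b1 (outc H L x0 j r e).1 (outc H L x0 j r e).2
  | _ => [::]
  end.

Definition goodP (H L x0 : R) (j : nat) : Prop :=
  dyadic H /\ dyadic L /\ dyadic x0 /\ 0 <= H /\ H <= / 2 ^ j /\ 0 <= L.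

Lemma tent_dy H L x0 x : dyadic H -> dyadic L -> dyadic x0 -> dyadic x ->
  dyadic (tent H L x0 x).
Proof.
move=> hH hL h0 hx; rewrite /tent; apply: dy_max; first exact: (dy_IZR 0).
apply: dy_sub => //; apply: dy_mul => //; apply: dy_abs; exact: dy_sub.
Qed.

Lemma outc_dy H L x0 j r e : goodP H L x0 j -> dyadic r -> dyadic e -> 0 <= e ->
  dyadic (outc H L x0 j r e).1 /\ dyadic (outc H L x0 j r e).2 /\
  0 <= (outc H L x0 j r e).2.
Proof.
move=> [hH [hL [h0 [hH0 [hHj hL0]]]]] hr he he0.
have dLo : dyadic (LoF H L x0 r e).
  rewrite /LoF; apply: dy_max; first exact: (dy_IZR 0).
  apply: dy_sub; [exact: tent_dy| exact: dy_mul].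
have dUp : dyadic (UpF H L x0 r e).
  rewrite /UpF /clamp; apply: tent_dy => //; apply: dy_max; first exact: dy_sub.
  apply: dy_min => //; exact: dy_add.
have dw := w_dy he.
have hw := w_nonneg e.
rewrite /outc; case: Rlt_dec => /= h.
- split; [exact: (dy_IZR 0)| split => //].
- have [_ [_ [hlu _]]] := LU_basic x0 r hH0 hL0 he0.
  split; first by apply: dy_half; apply: dy_add.
  split; first by apply: dy_add => //; apply: dy_half; apply: dy_sub.
  lra.
Qed.

Lemma decode_psiP (S : finType) (b0 b1 : S) (hb : b0 != b1) H L x0 j s r e :
  goodP H L x0 j -> decode_interval b0 b1 s = Some (IFin r e) ->
  decode_interval b0 b1 (psiP b0 b1 H L x0 j s) =
    Some (IFin (outc H L x0 j r e).1 (outc H L x0 j r e).2).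
Proof.
move=> hg hs; rewrite /psiP hs.
have [hr [he he0]] := decode_interval_fin hs.
have [d1 [d2 d3]] := outc_dy hg hr he he0.
exact: decode_encI.
Qed.

Lemma decode_psiP_inf (S : finType) (b0 b1 : S) H L x0 j s :
  decode_interval b0 b1 s = Some IInf ->
  decode_interval b0 b1 (psiP b0 b1 H L x0 j s) = Some IInf.
Proof. by move=> hs; rewrite /psiP hs. Qed.

Lemma out_contains H L x0 j r e x : goodP H L x0 j -> 0 <= e -> r - e <= x <= r + e ->
  (outc H L x0 j r e).1 - (outc H L x0 j r e).2 <= tent H L x0 x <=
  (outc H L x0 j r e).1 + (outc H L x0 j r e).2.
Proof.
move=> [hH [hL [h0 [hH0 [hHj hL0]]]]] he hx.
have hw := w_nonneg e.
have t0 := tent_nonneg H L x0 x; have t1 := tent_le x0 x hH0 hL0.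
rewrite /outc; case: Rlt_dec => /= h.
- have := w_ge he; lra.
- have := LU_in H x0 hL0 hx; lra.
Qed.

Lemma out_nested H L x0 j r e r' e' : goodP H L x0 j -> 0 <= e' ->
  r - e <= r' - e' -> r' + e' <= r + e ->
  (outc H L x0 j r e).1 - (outc H L x0 j r e).2 <=
    (outc H L x0 j r' e').1 - (outc H L x0 j r' e').2 /\
  (outc H L x0 j r' e').1 + (outc H L x0 j r' e').2 <=
    (outc H L x0 j r e).1 + (outc H L x0 j r e).2.
Proof.
move=> [hH [hL [h0 [hH0 [hHj hL0]]]]] he' h1 h2.
have hee : e' <= e by lra.
have he : 0 <= e by lra.
have wm := w_mono he' hee.
have hw' := w_nonneg e'.
rewrite /outc; case: (Rlt_dec _ e) => /= hb; case: (Rlt_dec _ e') => /= hb'.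
- lra.
- have [l0 [lH [llu _]]] := LU_basic x0 r' hH0 hL0 he'.
  have ws := w_small he' (Rnot_lt_le _ _ hb').
  have wb := w_big hb.
  lra.
- lra.
- have [m1 m2] := LU_mono H x0 hL0 he' h1 h2.
  lra.
Qed.

Lemma out_width H L x0 j r e : goodP H L x0 j -> 0 <= e ->
  2 * (outc H L x0 j r e).2 <= 2 * (L * e) + 4 * e.
Proof.
move=> [hH [hL [h0 [hH0 [hHj hL0]]]]] he.
have wl := w_le he.
rewrite /outc; case: Rlt_dec => /= h.
- have := Rmult_le_pos _ _ hL0 he; lra.
- have [_ [_ [_ hw]]] := LU_basic x0 r hH0 hL0 he; lra.
Qed.



Lemma incl_fin r e r' e' : 0 <= e' ->
  (forall y, in_interval (IFin r' e') y -> in_interval (IFin r e) y) ->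
  r - e <= r' - e' /\ r' + e' <= r + e.
Proof.
move=> he h; split.
- have /= := h (r' - e') ltac:(simpl; lra); lra.
- have /= := h (r' + e') ltac:(simpl; lra); lra.
Qed.

Lemma name_nest_iter (S : finType) (b0 b1 : S) phi x : IsRealNameI b0 b1 phi x ->
  forall k n I J, decode_interval b0 b1 (phi n) = Some I ->
  decode_interval b0 b1 (phi (n + k)%nat) = Some J ->
  forall y, in_interval J y -> in_interval I y.
Proof.
move=> [hd [hn hi]]; elim=> [|k IH] n I J hI hJ y hy.
- rewrite addn0 hI in hJ; case: hJ => ->; exact: hy.
- have [K hK] := hd (n + k)%nat.
  apply: (IH n I K hI hK).
  apply: (hn (n + k)%nat K J hK) => //.
  by rewrite -addnS.
Qed.

Lemma name_in (S : finType) (b0 b1 : S) phi x : IsRealNameI b0 b1 phi x ->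
  forall n I, decode_interval b0 b1 (phi n) = Some I -> in_interval I x.
Proof. by move=> [_ [_ hi]]; apply/(hi x). Qed.

Lemma name_small (S : finType) (b0 b1 : S) phi x : IsRealNameI b0 b1 phi x ->
  forall eps, 0 < eps -> exists n r e,
    decode_interval b0 b1 (phi n) = Some (IFin r e) /\ e <= eps.
Proof.
move=> hname eps heps.
apply: NNPP => hne.
have hbig : forall n r e, decode_interval b0 b1 (phi n) = Some (IFin r e) -> eps < e.
  move=> n r e h; apply: Rnot_le_lt => hle; apply: hne; by exists n, r, e.
have hx := name_in hname.
have [hd [hn hi]] := hname.
case: (classic (forall n r e, decode_interval b0 b1 (phi n) = Some (IFin r e) ->
                  x + eps <= r + e)) => hA.
- have : x + eps = x.
    apply/(hi (x + eps)) => n I hI.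
    case: I hI => [r e|] hI //=.
    have := hA n r e hI; have /= := hx n _ hI; lra.
  lra.
- have [m [r [e [hm hlt]]]] : exists m r e,
      decode_interval b0 b1 (phi m) = Some (IFin r e) /\ r + e < x + eps.
    apply: NNPP => hn'; apply: hA => n r e h; apply: Rnot_lt_le => hl.
    apply: hn'; by exists n, r, e.
  have hem := hbig _ _ _ hm.
  have : x - eps = x.
    apply/(hi (x - eps)) => n I hI.
    case: I hI => [r' e'|] hI //=.
    have he' := hbig _ _ _ hI.
    have [_ [_ he0']] := decode_interval_fin hI.
    have hxn /= := hx n _ hI.
    case: (leqP n m) => hnm.
    + have := name_nest_iter hname (k := (m - n)%N) hI (J := IFin r e).
      rewrite subnKC // => /(_ hm) hsub.
      have /= := hsub (x - eps); have /= := hx m _ hm; lra.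
    + have := name_nest_iter hname (k := (n - m)%N) hm (J := IFin r' e').
      rewrite subnKC; last exact: ltnW.
      move=> /(_ hI) hsub.
      have [i1 i2] := incl_fin he0' hsub.
      rewrite /= in hxn *; lra.
  lra.
Qed.

Lemma small_eq a : (forall d, 0 < d -> Rabs a <= d) -> a = 0.
Proof.
move=> h; apply: NNPP => ha.
have hpos : 0 < Rabs a by apply: Rabs_pos_lt.
have := h (Rabs a / 2) ltac:(lra); lra.
Qed.

Lemma psiP_name (S : finType) (b0 b1 : S) (hb : b0 != b1) H L x0 j :
  goodP H L x0 j -> IsFunNameI b0 b1 (psiP b0 b1 H L x0 j) (tent H L x0).
Proof.
move=> hg phi x hx01 hname.
have hname' := hname.
have [hd [hn hi]] := hname'.
have hxin := name_in hname.
split; [|split].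
- move=> n; have [I hI] := hd n.
  case: I hI => [r e|] hI.
  + eexists; exact: decode_psiP hI.
  + eexists; exact: decode_psiP_inf hI.
- move=> n I J hI hJ y hy.
  have [I0 hI0] := hd n; have [J0 hJ0] := hd n.+1.
  case: I0 hI0 => [r e|] hI0; last first.
    by rewrite (decode_psiP_inf _ _ _ _ hI0) in hI; case: hI => <-.
  case: J0 hJ0 => [r' e'|] hJ0; last first.
    have := hn n _ _ hI0 hJ0 (r + e + 1) Logic.I; rewrite /=; lra.
  rewrite (decode_psiP hb hg hI0) in hI; case: hI => <-.
  rewrite (decode_psiP hb hg hJ0) in hJ; case: hJ => hJ; rewrite -hJ in hy.
  have [_ [_ he0']] := decode_interval_fin hJ0.
  have [i1 i2] := incl_fin he0' (hn n _ _ hI0 hJ0).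
  have [o1 o2] := out_nested hg he0' i1 i2.
  move: hy => /=; lra.
- move=> y; split.
  + move=> hy.
    suff : y - tent H L x0 x = 0 by lra.
    apply: small_eq => d hd0.
    have [hH [hL [h0 [hH0 [hHj hL0]]]]] := hg.
    have hpos : 0 < 2 * L + 4 by lra.
    have [n [r [e [hne hel]]]] := name_small hname (eps := d / (2 * L + 4))
       ltac:(apply: Rdiv_lt_0_compat; lra).
    have [_ [_ he0]] := decode_interval_fin hne.
    have hyo /= := hy n _ (decode_psiP hb hg hne).
    have hxo := hxin n _ hne; rewrite /= in hxo.
    have hc := out_contains hg he0 hxo.
    have hw := out_width r hg he0.
    have : (2 * L + 4) * e <= d.
      have -> : d = (2 * L + 4) * (d / (2 * L + 4)) by field; lra.
      apply: Rmult_le_compat_l; lra.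
    move=> hde.
    rewrite /= in hyo; rewrite /Rabs; case: Rcase_abs => _; lra.
  + move=> -> n I hI.
    have [I0 hI0] := hd n.
    case: I0 hI0 => [r e|] hI0.
    * rewrite (decode_psiP hb hg hI0) in hI; case: hI => <-.
      have [_ [_ he0]] := decode_interval_fin hI0.
      have := out_contains hg he0 (hxin n _ hI0); rewrite /=; lra.
    * by rewrite (decode_psiP_inf _ _ _ _ hI0) in hI; case: hI => <-.
Qed.



Lemma ex_min (P : nat -> Prop) : (exists n, P n) ->
  exists n, P n /\ forall m, P m -> (n <= m)%N.
Proof.
move=> [n0 h0]; apply: NNPP => hno.
have key : forall n m, (m <= n)%N -> ~ P m.
  elim=> [|n IH] m hm hPm.
  - have hm0 : m = 0%N by lia.
    subst m; apply: hno; exists 0%N; split => // m' _; lia.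
  - case: (leqP m n) => hmn; first exact: IH hmn hPm.
    have hm1 : m = n.+1 by lia.
    rewrite hm1 in hPm; apply: hno; exists n.+1; split => // m' hm'.
    case: (leqP n.+1 m') => // hlt.
    exfalso; apply: (IH m') => //; lia.
exact: key (leqnn n0) h0.
Qed.

Lemma tent_abs_lip H L x0 x y : 0 <= L ->
  Rabs (tent H L x0 x - tent H L x0 y) <= L * Rabs (x - y).
Proof.
move=> hL.
have h1 := tent_lip H x0 x y hL.
have h2 := tent_lip H x0 y x hL.
rewrite Rabs_minus_sym in h2.
apply: Rabs_le; split; lra.
Qed.

Lemma tent_cont H L x0 : 0 <= L -> Continuous01 (tent H L x0).
Proof.
move=> hL x _ eps heps.
exists (eps / (L + 1)); split; first by apply: Rdiv_lt_0_compat; lra.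
move=> y _ hxy.
apply: Rle_lt_trans (tent_abs_lip H x0 x y hL) _.
have hxy0 := Rabs_pos (x - y).
have : L * Rabs (x - y) <= L * (eps / (L + 1)).
  apply: Rmult_le_compat_l => //; lra.
have : L * (eps / (L + 1)) < eps.
  have -> : L * (eps / (L + 1)) = eps * (L / (L + 1)) by field; lra.
  have : L / (L + 1) < 1.
    have hp : 0 < L + 1 by lra.
    have -> : L / (L + 1) = 1 - / (L + 1) by field; lra.
    have := Rinv_0_lt_compat _ hp; lra.
  move=> h; have := Rmult_lt_compat_l _ _ _ heps h; lra.
lra.
Qed.

Lemma modcond_psiP (S : finType) (b0 b1 : S) (hb : b0 != b1) H p x0 j n :
  goodP H (2 ^ p) x0 j -> ModCondI b0 b1 (psiP b0 b1 H (2 ^ p) x0 j) n (n + p + 2).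
Proof.
move=> hg s r e hs he.
have [_ [_ he0]] := decode_interval_fin hs.
exists (outc H (2 ^ p) x0 j r e).1, (outc H (2 ^ p) x0 j r e).2.
split; first exact: decode_psiP.
have hw := out_width r hg he0.
have hA : 1 <= 2 ^ p by have := Rle_pow 2 0 p; simpl; apply; [lra|lia].
have hB := pow2_pos n.
rewrite !pow_add /= Rmult_1_r Rinv_mult Rinv_mult in he.
have hiA := pow2_pos p.
set A := 2 ^ p in hw hA he hiA *; set B := 2 ^ n in hB he *.
have h1 : 2 * e * (B * A * (2 * 2)) <= 1.
  have -> : 1 = / B * / A * / (2 * 2) * (B * A * (2 * 2)) by field; lra.
  apply: Rmult_le_compat_r => //; nra.
have h2 : (2 * A + 4) * e * B <= 1 by nra.
have : 2 * (A * e) + 4 * e <= / B.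
  apply/(Rmult_le_reg_r B) => //; rewrite Rinv_l; nra.
lra.
Qed.

Lemma psiP_mu (S : finType) (b0 b1 : S) (hb : b0 != b1) H p x0 j :
  goodP H (2 ^ p) x0 j -> exists m,
   IsMuIf b0 b1 (psiP b0 b1 H (2 ^ p) x0 j) (tent H (2 ^ p) x0) m /\
   forall n, (m n <= n + p + 3)%N.
Proof.
move=> hg.
have [hH [hL [h0 [hH0 [hHj hL0]]]]] := hg.
have [k [hk hkmin]] := ex_min (P := fun k => forall x, 0 <= x <= 1 ->
    Rabs (tent H (2 ^ p) x0 x) + 1 <= 2 ^ k) ltac:(
    exists 1%nat => x _; have := tent_nonneg H (2 ^ p) x0 x;
    have := tent_le x0 x hH0 hL0; have := ipow_le1 j;
    rewrite /Rabs; case: Rcase_abs => /= _; lra).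
have hN : forall n, exists N, ModCondI b0 b1 (psiP b0 b1 H (2 ^ p) x0 j) n N /\
    forall N', ModCondI b0 b1 (psiP b0 b1 H (2 ^ p) x0 j) n N' -> (N <= N')%N.
  move=> n; apply: ex_min; exists (n + p + 2)%N; exact: modcond_psiP.
pose Nf n := proj1_sig (constructive_indefinite_description _ (hN n)).
have hNf : forall n, ModCondI b0 b1 (psiP b0 b1 H (2 ^ p) x0 j) n (Nf n) /\
    forall N', ModCondI b0 b1 (psiP b0 b1 H (2 ^ p) x0 j) n N' -> (Nf n <= N')%N.
  move=> n; exact: (proj2_sig (constructive_indefinite_description _ (hN n))).
exists (fun n => k + Nf n)%N; split.
- move=> n; exists k, (Nf n); split; first by split.
  have [a b] := hNf n; by split; [|split].
- move=> n.
  have hk1 : (k <= 1)%N.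
    apply: hkmin => x _; have := tent_nonneg H (2 ^ p) x0 x;
    have := tent_le x0 x hH0 hL0; have := ipow_le1 j;
    rewrite /Rabs; case: Rcase_abs => /= _; lra.
  have hn2 := (hNf n).2 _ (modcond_psiP hb (n := n) hg).
  lia.
Qed.

Local Close Scope R_scope.

Lemma Zpow2 k : Z.of_nat (2 ^ k) = (2 ^ Z.of_nat k)%Z.
Proof.
elim: k => [|k IH]; first by [].
rewrite expnS Nat2Z.inj_succ Z.pow_succ_r; last lia.
rewrite -IH; lia.
Qed.

Local Open Scope R_scope.

Lemma tent_zero_fun L x0 x : 0 <= L -> tent 0 L x0 x = 0.
Proof.
move=> hL; rewrite /tent.
have := Rmult_le_pos _ _ hL (Rabs_pos (x - x0)) => h.
rewrite /Rmax; case: Rle_dec => /= h'; lra.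
Qed.

Lemma outc_eq H L x0 j r e : 0 <= L -> 0 <= e ->
  (e <= / 2 ^ j -> forall y, r - e <= y <= r + e -> tent H L x0 y = 0) ->
  outc H L x0 j r e = (0, wfun e).
Proof.
move=> hL he hz; rewrite /outc; case: Rlt_dec => /= h; first by [].
have [l u] := LU_zero hL he (hz (Rnot_lt_le _ _ h)).
rewrite l u; f_equal; lra.
Qed.

Lemma ipow_mul_pow j q : (j <= q)%N -> 2 ^ (q - j) * / 2 ^ q = / 2 ^ j.
Proof.
move=> h.
have hq : 2 ^ q = 2 ^ (q - j) * 2 ^ j by rewrite -pow_add; f_equal; lia.
rewrite hq; have := pow2_pos j; have := pow2_pos (q - j).
move=> h1 h2; field; lra.
Qed.

Lemma mainTheorem18_aux (S : finType) (b0 b1 : S) (hb : b0 != b1) :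
  ~ exists (M : OracleMachine S) (P Q : sop),
    forall (psi : seq S -> seq S) (f : R -> R) (m : nat -> nat),
      Continuous01 f -> IsFunNameI b0 b1 psi f -> IsMuIf b0 b1 psi f m ->
      (forall a, exists t out, HaltsIn M psi a t out) /\
      (forall nu : nat -> nat,
         (forall n, exists t out, HaltsIn M psi (nseq n b1) t out /\ nu n = size out) ->
         IsModulus f nu) /\
      (forall a t out, HaltsIn M psi a t out -> (t <= sop_eval P m (size a))%N) /\
      (forall n a t out, (size a <= n)%N -> HaltsIn M psi a t out ->
         (size out <= sop_eval Q m n)%N).
Proof.
move=> [M [P [Q Hyp]]].
have g1 : goodP 0 (2 ^ 0) 0 0.
  split; first exact: (dy_IZR 0).
  split; first exact: dy_pow.
  split; first exact: (dy_IZR 0).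
  split; first lra.
  split; first by have := ipow_pos 0; lra.
  by have := pow2_pos 0; lra.
set psi1 := psiP b0 b1 0 (2 ^ 0) 0 0.
set f1 := tent 0 (2 ^ 0) 0.
have [m1 [hm1 hm1b]] := psiP_mu hb g1.
have [tot1 [_ [time1 _]]] := Hyp psi1 f1 m1 (tent_cont _ _ (Rlt_le _ _ (pow2_pos 0)))
  (psiP_name hb g1) hm1.
have [A [d hpoly]] := sop_poly P 3.
have [j hj] := exp_dom (9 * A) d.
set n := j.+1.
have [t [out hh1]] := tot1 (nseq n b1).
have ht : (t <= A * (n + 1) ^ d)%N.
  have := time1 _ _ _ hh1; rewrite size_nseq => h1.
  apply: leq_trans h1 _; apply: leq_trans (hpoly n).
  apply: sop_mono => [x|x y hxy]; [have := hm1b x; lia| lia].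
set L := queries psi1 (init_config M (nseq n b1)) t.
have hL : (9 * size L < 2 ^ n)%N.
  have := size_queries psi1 (init_config M (nseq n b1)) t.
  rewrite -/L => hs.
  have e1 : (n + 1 = j.+2)%N by rewrite /n; lia.
  rewrite e1 in ht.
  apply: leq_ltn_trans hj; nia.
set u := / 2 ^ j.
have hu : 0 < u by apply: ipow_pos.
set ci := fun i : nat => IZR (2 * Z.of_nat i + 1) * / 2 ^ j.+2.
set dl := / 2 ^ j.+3.
have hpj := pow2_pos j.
have e2 : / 2 ^ j.+2 = u / 4 by rewrite /u !ipow_S; field; lra.
have e3 : dl = u / 8 by rewrite /dl /u !ipow_S; field; lra.
pose hit := fun (s : seq S) (i : nat) => exists r e,
  decode_interval b0 b1 s = Some (IFin r e) /\ e <= u /\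
  r - e <= ci i + dl /\ ci i - dl <= r + e.
have hdiam : forall s, s \in L -> forall i i', hit s i -> hit s i' -> (i <= i' + 4)%N.
  move=> s _ i i' [r [e [hs [he [h1 h2]]]]] [r' [e' [hs' [he' [h1' h2']]]]].
  rewrite hs in hs'; case: hs' => <- <- in h1' h2' he'.
  move: h2 h1'; rewrite /ci e2 e3 => h2 h1'.
  have : (IZR (2 * Z.of_nat i + 1) - IZR (2 * Z.of_nat i' + 1) - 9) * u <= 0 by nra.
  move=> h3.
  have h4 : IZR (2 * Z.of_nat i + 1) - IZR (2 * Z.of_nat i' + 1) <= 9 by nra.
  rewrite -minus_IZR in h4.
  have h5 := le_IZR _ _ h4.
  lia.
have [i [hi hnot]] := pigeon hdiam hL.
set x0 := ci i.
have hx0a : 0 <= x0 - dl.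
  rewrite /x0 /ci e2 e3.
  have : 1 <= IZR (2 * Z.of_nat i + 1) by apply: IZR_le; lia.
  nra.
have hx0b : x0 + dl <= 1.
  rewrite /x0 /ci e2 e3.
  have hz : (2 * Z.of_nat i + 1 + 1 <= 2 ^ Z.of_nat j.+2)%Z.
    have e : (2 ^ j.+2 = 2 * 2 ^ j.+1)%N by rewrite expnS.
    have := Zpow2 j.+2; move: hi; rewrite /n; lia.
  have := IZR_le _ _ hz; rewrite plus_IZR -pow2_IZR => hz'.
  have : 2 ^ j.+2 * u = 4 by rewrite /u /= ; field; have := pow2_pos j; lra.
  nra.
set K := size out.
set q := maxn j.+3 K.
set p := (q - j)%N.
have hLd : 2 ^ p * / 2 ^ q = u by rewrite /p ipow_mul_pow //; lia.
have hdq : / 2 ^ q <= dl by apply: ipow_le; lia.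
have g2 : goodP u (2 ^ p) x0 j.
  split; first exact: dy_ipow.
  split; first exact: dy_pow.
  split; first by apply: dy_mul; [exact: dy_IZR| exact: dy_ipow].
  split; first lra.
  split; first (rewrite /u; lra).
  by have := pow2_pos p; lra.
set psi2 := psiP b0 b1 u (2 ^ p) x0 j.
set f2 := tent u (2 ^ p) x0.
have hagree : forall w, w \in L -> psi1 w = psi2 w.
  move=> w hw; rewrite /psi1 /psi2 /psiP.
  case E: (decode_interval b0 b1 w) => [[r e|]|] //.
  have [_ [_ he0]] := decode_interval_fin E.
  rewrite (outc_eq (H := 0) (x0 := 0) (j := 0%nat) (r := r) (Rlt_le _ _ (pow2_pos 0)) he0); last first.
    move=> _ y _; exact: tent_zero_fun (Rlt_le _ _ (pow2_pos 0)).
  rewrite (outc_eq (H := u) (x0 := x0) (j := j) (r := r) (Rlt_le _ _ (pow2_pos p)) he0) //.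
  move=> he y hy.
  have hn : ~ (r - e <= x0 + dl /\ x0 - dl <= r + e).
    move=> [c1 c2]; apply: (hnot w hw); exists r, e; split => //; split => //.
  have hfar : / 2 ^ q <= Rabs (y - x0).
    have hd' : dl < Rabs (y - x0).
      case: (Rle_lt_dec (r - e) (x0 + dl)) => c1.
      - case: (Rle_lt_dec (x0 - dl) (r + e)) => c2; first by exfalso; exact: hn (conj c1 c2).
        rewrite /Rabs; case: Rcase_abs => ?; lra.
      - rewrite /Rabs; case: Rcase_abs => ?; lra.
    lra.
  rewrite /tent.
  have := Rmult_le_compat_l _ _ _ (Rlt_le _ _ (pow2_pos p)) hfar.
  rewrite hLd => hh.
  rewrite /Rmax; case: Rle_dec => /= h'; lra.
have hh2 : HaltsIn M psi2 (nseq n b1) t out.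
  apply: halts_agree hh1 _; exact: hagree.
have [m2 [hm2 _]] := psiP_mu hb g2.
have [tot2 [mod2 _]] := Hyp psi2 f2 m2 (tent_cont _ _ (Rlt_le _ _ (pow2_pos p)))
  (psiP_name hb g2) hm2.
pose nu := fun n' => size (epsilon (inhabits [::])
   (fun o => exists t', HaltsIn M psi2 (nseq n' b1) t' o)).
have hnu : forall n', exists t' out', HaltsIn M psi2 (nseq n' b1) t' out' /\ nu n' = size out'.
  move=> n'.
  have hex : exists o, exists t', HaltsIn M psi2 (nseq n' b1) t' o.
    have [t' [o h]] := tot2 (nseq n' b1); by exists o, t'.
  have [t' h] := epsilon_spec (inhabits [::]) _ hex.
  by exists t', (epsilon (inhabits [::]) (fun o => exists t', HaltsIn M psi2 (nseq n' b1) t' o)).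
have hmod := mod2 nu hnu.
have hnun : nu n = K.
  have [t' [o' [h1 h2]]] := hnu n.
  by rewrite h2 /K (halts_unique h1 hh2).
have hx0 : 0 <= x0 <= 1 by lra.
have hy : 0 <= x0 + / 2 ^ q <= 1 by have := ipow_pos q; lra.
have hxy : Rabs (x0 - (x0 + / 2 ^ q)) <= / 2 ^ nu n.
  rewrite hnun.
  have -> : x0 - (x0 + / 2 ^ q) = - / 2 ^ q by ring.
  rewrite Rabs_Ropp Rabs_pos_eq; last exact: Rlt_le (ipow_pos q).
  apply: ipow_le; lia.
have := hmod n x0 (x0 + / 2 ^ q) hx0 hy hxy.
rewrite /f2 /tent.
have -> : x0 - x0 = 0 by ring.
have -> : x0 + / 2 ^ q - x0 = / 2 ^ q by ring.
rewrite Rabs_R0 Rmult_0_r Rminus_0_r (Rabs_pos_eq (/ 2 ^ q)); last exact: Rlt_le (ipow_pos q).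
rewrite hLd Rminus_diag.
have -> : Rmax 0 u = u by rewrite /Rmax; case: Rle_dec => /= h'; lra.
have -> : Rmax 0 0 = 0 by rewrite /Rmax; case: Rle_dec => /= h'; lra.
rewrite Rminus_0_r Rabs_pos_eq; last lra.
rewrite /n ipow_S -/u; lra.
Qed.

Local Close Scope R_scope.

Theorem mainTheorem18 (S : finType) (b0 b1 : S) (hb : b0 != b1) :
  ~ exists (M : OracleMachine S) (P Q : sop),
    forall (psi : seq S -> seq S) (f : R -> R) (m : nat -> nat),
      Continuous01 f -> IsFunNameI b0 b1 psi f -> IsMuIf b0 b1 psi f m ->
      (* M^psi is total *)
      (forall a, exists t out, HaltsIn M psi a t out) /\
      (* xi_{N^N}(M^psi) = (n |-> |M^psi(1^n)|) is a modulus of continuity of f *)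
      (forall nu : nat -> nat,
         (forall n, exists t out, HaltsIn M psi (nseq n b1) t out /\ nu n = size out) ->
         IsModulus f nu) /\
      (* Time_{M}(psi, a) <= P(mu(psi), |a|) *)
      (forall a t out, HaltsIn M psi a t out -> (t <= sop_eval P m (size a))%N) /\
      (* |M^psi|(n) <= Q(mu(psi), n) *)
      (forall n a t out, (size a <= n)%N -> HaltsIn M psi a t out ->
         (size out <= sop_eval Q m n)%N).
Proof. exact: mainTheorem18_aux hb. Qed.
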